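(* If $X$ is a Rothberger space satisfying ${\sf S}_1(\mathcal{G}_K,\mathcal{G}_{D_\Gamma})$, then $X$ is productively weakly Rothberger: for every weakly Rothberger space $Y$, $X\times Y$ is weakly Rothberger.
   Context: All spaces are infinite ${\sf T}_1$ topological spaces. $\mathcal{G}_K$ is the family of all collections $\mathcal{U}$ of ${\sf G}_\delta$ subsets of $X$ with $X\notin\mathcal{U}$ such that each compact subset of $X$ is contained in some member of $\mathcal{U}$. $\mathcal{G}_{D_\Gamma}$ is the family of infinite collections $\mathcal{U}$ of ${\sf G}_\delta$ subsets of $X$ such that for each nonempty open $U\subseteq X$, $\{V\in\mathcal{U}:U\cap V=\emptyset\}$ is finite. ${\sf S}_1(\mathcal{A},\mathcal{B})$: for each sequence $(A_n)$ of elements of $\mathcal{A}$ there are $B_n\in A_n$ with $\{B_n:n\in\mathbb{N}\}\in\mathcal{B}$. Rothberger: for each sequence $(\mathcal{U}_n)$ of open covers there are $U_n\in\mathcal{U}_n$ with $\{U_n\}$ a cover. Weakly Rothberger: for each sequence $(\mathcal{U}_n)$ of open covers there are $U_n\in\mathcal{U}_n$ with $\bigcup_nU_n$ dense. *)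

(* Defs.v *)
From Stdlib Require Import List Classical.
Import ListNotations.

Set Implicit Arguments.

Definition set_eq {X : Type} (A B : X -> Prop) : Prop := forall x, A x <-> B x.
Definition subset {X : Type} (A B : X -> Prop) : Prop := forall x, A x -> B x.

Definition is_topology {X : Type} (op : (X -> Prop) -> Prop) : Prop :=
  op (fun _ => True) /\
  (forall U V, op U -> op V -> op (fun x => U x /\ V x)) /\
  (forall F : (X -> Prop) -> Prop, (forall U, F U -> op U) ->
     op (fun x => exists U, F U /\ U x)).

Definition T1 {X : Type} (op : (X -> Prop) -> Prop) : Prop :=
  forall x y : X, x <> y -> exists U, op U /\ U x /\ ~ U y.

Definition infinite_type (X : Type) : Prop :=
  ~ exists l : list X, forall x, In x l.

Definition prod_open {X Y : Type} (opX : (X -> Prop) -> Prop) (opY : (Y -> Prop) -> Prop)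
  (W : X * Y -> Prop) : Prop :=
  forall p, W p -> exists U V, opX U /\ opY V /\ U (fst p) /\ V (snd p) /\
     (forall a b, U a -> V b -> W (a, b)).

Definition open_cover {X : Type} (op : (X -> Prop) -> Prop) (F : (X -> Prop) -> Prop) : Prop :=
  (forall U, F U -> op U) /\ (forall x, exists U, F U /\ U x).

Definition compact_subset {X : Type} (op : (X -> Prop) -> Prop) (K : X -> Prop) : Prop :=
  forall F : (X -> Prop) -> Prop, (forall U, F U -> op U) ->
    (forall x, K x -> exists U, F U /\ U x) ->
    exists l : list (X -> Prop), (forall U, In U l -> F U) /\
      (forall x, K x -> exists U, In U l /\ U x).

Definition Gdelta {X : Type} (op : (X -> Prop) -> Prop) (A : X -> Prop) : Prop :=
  exists U : nat -> X -> Prop, (forall n, op (U n)) /\ set_eq A (fun x => forall n, U n x).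

Definition infinite_family {X : Type} (F : (X -> Prop) -> Prop) : Prop :=
  forall l : list (X -> Prop), exists A, F A /\ forall B, In B l -> ~ set_eq A B.

Definition finite_family {X : Type} (F : (X -> Prop) -> Prop) : Prop :=
  exists l : list (X -> Prop), forall A, F A -> exists B, In B l /\ set_eq A B.

Definition G_K {X : Type} (op : (X -> Prop) -> Prop) (F : (X -> Prop) -> Prop) : Prop :=
  (forall A, F A -> Gdelta op A) /\
  ~ (exists A, F A /\ set_eq A (fun _ => True)) /\
  (forall K, compact_subset op K -> exists A, F A /\ subset K A).

Definition G_DGamma {X : Type} (op : (X -> Prop) -> Prop) (F : (X -> Prop) -> Prop) : Prop :=
  (forall A, F A -> Gdelta op A) /\
  infinite_family F /\
  (forall U, op U -> (exists x, U x) ->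
     finite_family (fun V => F V /\ forall x, ~ (U x /\ V x))).

Definition S1 {X : Type} (clA clB : ((X -> Prop) -> Prop) -> Prop) : Prop :=
  forall Fs : nat -> (X -> Prop) -> Prop, (forall n, clA (Fs n)) ->
    exists B : nat -> X -> Prop, (forall n, Fs n (B n)) /\
      clB (fun S => exists n, S = B n).

Definition Rothberger {X : Type} (op : (X -> Prop) -> Prop) : Prop :=
  forall Us : nat -> (X -> Prop) -> Prop, (forall n, open_cover op (Us n)) ->
    exists U : nat -> X -> Prop, (forall n, Us n (U n)) /\
      (forall x, exists n, U n x).

Definition weakly_Rothberger {X : Type} (op : (X -> Prop) -> Prop) : Prop :=
  forall Us : nat -> (X -> Prop) -> Prop, (forall n, open_cover op (Us n)) ->
    exists U : nat -> X -> Prop, (forall n, Us n (U n)) /\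
      (* the union of the U n is dense: it meets every nonempty open set *)
      (forall W, op W -> (exists x, W x) -> exists n x, W x /\ U n x).

(* Main.v *)
Require Import Defs.
From Stdlib Require Import List Classical FunctionalExtensionality PropExtensionality IndefiniteDescription Cantor.
Import ListNotations.

Lemma mychoice {A B : Type} (P : A -> B -> Prop) :
  (forall x, exists y, P x y) -> exists f : A -> B, forall x, P x (f x).
Proof.
  intros H. exists (fun x => proj1_sig (constructive_indefinite_description _ (H x))).
  intro x. exact (proj2_sig (constructive_indefinite_description _ (H x))).
Qed.

Lemma op_ext {X : Type} (op : (X -> Prop) -> Prop) (U V : X -> Prop) :
  op U -> (forall x, U x <-> V x) -> op V.
Proof.
  intros H E. replace V with U; auto.
  apply functional_extensionality; intro x; apply propositional_extensionality; auto.
Qed.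

Lemma op_inter_list {X : Type} (op : (X -> Prop) -> Prop) (hX : is_topology op)
  (Vs : nat -> X -> Prop) (hV : forall i, op (Vs i)) :
  forall li : list nat, op (fun b => forall i, In i li -> Vs i b).
Proof.
  destruct hX as [hT [hI hU]].
  induction li as [|i0 li IH].
  - apply (op_ext op (fun _ => True)); auto. intros x; split; auto. intros _ i [].
  - apply (op_ext op (fun b => Vs i0 b /\ (forall i, In i li -> Vs i b))); auto.
    intros x; split.
    + intros [H1 H2] i [->|Hi]; auto.
    + intros H; split; [apply H; left; auto | intros i Hi; apply H; right; auto].
Qed.

Lemma list_idx {A : Type} (g : nat -> A) :
  forall l : list A, (forall U, In U l -> exists i, U = g i) ->
  exists li : list nat, forall U, In U l -> exists i, In i li /\ U = g i.
Proof.
  induction l as [|u l IH]; intros H.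
  - exists []. intros U [].
  - destruct (H u (or_introl eq_refl)) as [i0 Hi0].
    destruct IH as [li Hli]. { intros U HU; apply H; right; auto. }
    exists (i0 :: li). intros U [<-|HU].
    + exists i0; split; [left|]; auto.
    + destruct (Hli U HU) as [i [Hi E]]; exists i; split; [right|]; auto.
Qed.

Lemma core (X Y : Type) (opX : (X -> Prop) -> Prop) (opY : (Y -> Prop) -> Prop)
  (hX : is_topology opX) (hY : is_topology opY) (hR : Rothberger opX)
  (hW : weakly_Rothberger opY) (Ws : nat -> (X * Y -> Prop) -> Prop)
  (hWs : forall n, open_cover (prod_open opX opY) (Ws n))
  (N : nat -> nat -> nat) (K : X -> Prop) (hK : compact_subset opX K) :
  exists (O : nat -> X -> Prop) (sel : nat -> nat -> X * Y -> Prop),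
    (forall j, opX (O j)) /\ (forall j x, K x -> O j x) /\
    (forall j i, Ws (N j i) (sel j i)) /\
    (forall a, (forall j, O j a) -> forall V, opY V -> (exists b, V b) ->
       exists j i b, V b /\ sel j i (a, b)).
Proof.
  set (Vc := fun j (V : Y -> Prop) => opY V /\ exists (O : X -> Prop) (f : nat -> X * Y -> Prop),
     opX O /\ (forall x, K x -> O x) /\ (forall i, Ws (N j i) (f i)) /\
     (forall a b, O a -> V b -> exists i, f i (a, b))).
  assert (Hcov : forall j, open_cover opY (Vc j)).
  { intro j. split; [intros V [HV _]; exact HV|].
    intro y.
    set (Us := fun i (U : X -> Prop) => exists V W, opX U /\ opY V /\ V y /\ Ws (N j i) W /\
                 (forall a b, U a -> V b -> W (a, b))).
    assert (HUs : forall i, open_cover opX (Us i)).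
    { intro i. split.
      - intros U [V [W [HU _]]]; exact HU.
      - intro x. destruct (hWs (N j i)) as [Hop Hc].
        destruct (Hc (x, y)) as [W [HW Wxy]].
        destruct (Hop W HW (x, y) Wxy) as [U [V [HU [HV [Ux [Vy Hsub]]]]]].
        exists U; split; auto. exists V, W; repeat split; auto. }
    destruct (hR Us HUs) as [Usel [HUsel HUcov]].
    destruct (mychoice (fun i (p : (Y -> Prop) * (X * Y -> Prop)) =>
       opY (fst p) /\ fst p y /\ Ws (N j i) (snd p) /\
       (forall a b, Usel i a -> fst p b -> snd p (a, b)))) as [g Hg].
    { intro i. destruct (HUsel i) as [V [W [_ [HV [Vy [HW Hs]]]]]]. exists (V, W); auto. }
    destruct (hK (fun U => exists i, U = Usel i)) as [l [Hl1 Hl2]].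
    { intros U [i ->]. destruct (HUsel i) as [V [W [HU _]]]; exact HU. }
    { intros x _. destruct (HUcov x) as [i Hi]. exists (Usel i); split; eauto. }
    destruct (list_idx Usel l Hl1) as [li Hli].
    exists (fun b => forall i, In i li -> fst (g i) b). split.
    - split.
      + apply op_inter_list; auto. intro i; apply (Hg i).
      + exists (fun a => exists U, (fun U => exists i, In i li /\ U = Usel i) U /\ U a).
        exists (fun i => snd (g i)). split; [|split; [|split]].
        * destruct hX as [_ [_ hU]]. apply hU. intros U [i [_ ->]].
          destruct (HUsel i) as [V [W [HU _]]]; exact HU.
        * intros x Kx. destruct (Hl2 x Kx) as [U [HU Ux]].
          destruct (Hli U HU) as [i [Hi ->]]. exists (Usel i); split; eauto.
        * intro i; apply (Hg i).
        * intros a b [U [[i [Hi ->]] Ua]] Vb. exists i. apply (Hg i); auto.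
    - intros i Hi. apply (Hg i). }
  destruct (hW Vc Hcov) as [Vsel [HVsel Hdens]].
  destruct (mychoice (fun j (p : (X -> Prop) * (nat -> X * Y -> Prop)) =>
     opX (fst p) /\ (forall x, K x -> fst p x) /\ (forall i, Ws (N j i) (snd p i)) /\
     (forall a b, fst p a -> Vsel j b -> exists i, snd p i (a, b)))) as [h Hh].
  { intro j. destruct (HVsel j) as [_ [O [f H]]]. exists (O, f); exact H. }
  exists (fun j => fst (h j)), (fun j => snd (h j)).
  split; [intro j; apply (Hh j)|]. split; [intros j x Kx; apply (Hh j); auto|].
  split; [intros j i; apply (Hh j)|].
  intros a Ha V HV Vne.
  destruct (Hdens V HV Vne) as [j [b [Vb Sb]]].
  destruct (proj2 (proj2 (proj2 (Hh j))) a b (Ha j) Sb) as [i Hi].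
  exists j, i, b; auto.
Qed.

Theorem theorem5p16 (X : Type) (opX : (X -> Prop) -> Prop)
  (hX : is_topology opX) (hT1 : T1 opX) (hinf : infinite_type X)
  (hR : Rothberger opX) (hS : S1 (G_K opX) (G_DGamma opX)) :
  forall (Y : Type) (opY : (Y -> Prop) -> Prop),
    is_topology opY -> T1 opY -> infinite_type Y ->
    weakly_Rothberger opY -> weakly_Rothberger (prod_open opX opY).
Proof.
  intros Y opY hY _ _ hW Ws hWs.
  destruct (classic (compact_subset opX (fun _ => True))) as [Hc|Hnc].
  - destruct (core X Y opX opY hX hY hR hW Ws hWs (fun j i => to_nat (j, i)) _ Hc)
      as [O [sel [_ [HOK [Hsel Hgood]]]]].
    exists (fun n => sel (fst (of_nat n)) (snd (of_nat n))). split.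
    + intro n. specialize (Hsel (fst (of_nat n)) (snd (of_nat n))).
      rewrite <- surjective_pairing, cancel_to_of in Hsel. exact Hsel.
    + intros W HW [p Wp].
      destruct (HW p Wp) as [U [V [HU [HV [Up [Vp Hs]]]]]].
      destruct (Hgood (fst p) (fun j => HOK j _ I) V HV (ex_intro _ _ Vp)) as [j [i [b [Vb Sb]]]].
      exists (to_nat (j, i)), (fst p, b). rewrite cancel_of_to; simpl. auto.
  - set (Nk := fun k j i => to_nat (k, to_nat (j, i))).
    set (Good := fun k (A : X -> Prop) => exists sel : nat -> nat -> X * Y -> Prop,
       (forall j i, Ws (Nk k j i) (sel j i)) /\
       (forall a, A a -> forall V, opY V -> (exists b, V b) -> exists j i b, V b /\ sel j i (a, b))).
    set (Fs := fun k (A : X -> Prop) => Gdelta opX A /\ ~ set_eq A (fun _ => True) /\ Good k A).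
    assert (HFs : forall k, G_K opX (Fs k)).
    { intro k. split; [intros A [H _]; exact H|]. split.
      { intros [A [[_ [H _]] E]]. exact (H E). }
      intros K HK.
      assert (Hp : exists p, ~ K p).
      { apply NNPP; intro Hn. apply Hnc. intros F HF Hcov.
        destruct (HK F HF) as [l [H1 H2]].
        { intros x _; apply Hcov; auto. }
        exists l; split; auto. intros x _. apply H2.
        apply NNPP; intro Kx; apply Hn; eauto. }
      destruct Hp as [p Kp].
      destruct (core X Y opX opY hX hY hR hW Ws hWs (Nk k) K HK)
        as [O [sel [HO [HOK [Hsel Hgood]]]]].
      assert (Hp_open : opX (fun a => a <> p)).
      { destruct hX as [_ [_ hU]].
        apply (op_ext opX (fun x => exists U, (fun U => opX U /\ ~ U p) U /\ U x)).
        - apply hU. intros U [H _]; exact H.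
        - intros x; split.
          + intros [U [[_ Up] Ux]] ->; auto.
          + intros Hx. destruct (hT1 x p Hx) as [U [HU [Ux Up]]]. exists U; auto. }
      exists (fun a => forall n, O n a /\ a <> p). split; [split; [|split]|].
      - exists (fun n a => O n a /\ a <> p). split.
        + intro n. destruct hX as [_ [hI _]]. apply hI; auto.
        + intros x; split; auto.
      - intros E. destruct (proj2 (E p) I 0) as [_ H]. auto.
      - exists sel. split; auto. intros a Ha V HV Vne. apply Hgood; auto.
        intro j; apply (Ha j).
      - intros x Kx n. split; [apply HOK; auto|]. intros ->; auto. }
    destruct (hS Fs HFs) as [B [HB HDG]].
    destruct (mychoice (fun k (sel : nat -> nat -> X * Y -> Prop) =>
       (forall j i, Ws (Nk k j i) (sel j i)) /\
       (forall a, B k a -> forall V, opY V -> (exists b, V b) -> exists j i b, V b /\ sel j i (a, b))))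
      as [S HSel].
    { intro k. destruct (HB k) as [_ [_ H]]. exact H. }
    exists (fun n => S (fst (of_nat n)) (fst (of_nat (snd (of_nat n)))) (snd (of_nat (snd (of_nat n))))).
    split.
    + intro n. pose proof (proj1 (HSel (fst (of_nat n))) (fst (of_nat (snd (of_nat n)))) (snd (of_nat (snd (of_nat n))))) as H.
      unfold Nk in H. rewrite <- surjective_pairing, cancel_to_of, <- surjective_pairing, cancel_to_of in H.
      exact H.
    + intros W HW [p Wp].
      destruct (HW p Wp) as [U [V [HU [HV [Up [Vp Hs]]]]]].
      destruct HDG as [_ [Hinf Hfin]].
      destruct (Hfin U HU (ex_intro _ _ Up)) as [l Hl].
      destruct (Hinf l) as [A [[k ->] HA]].
      assert (Hm : exists a, U a /\ B k a).
      { apply NNPP; intro Hn.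
        destruct (Hl (B k)) as [B' [HB' E]].
        { split; [exists k; auto|]. intros x [Ux Bx]; apply Hn; eauto. }
        exact (HA B' HB' E). }
      destruct Hm as [a [Ua Ba]].
      destruct (proj2 (HSel k) a Ba V HV (ex_intro _ _ Vp)) as [j [i [b [Vb Sb]]]].
      exists (to_nat (k, to_nat (j, i))), (a, b).
      rewrite (cancel_of_to (k, _)). cbv beta iota zeta. change (fst (k, to_nat (j, i))) with k. change (snd (k, to_nat (j, i))) with (to_nat (j, i)). rewrite (cancel_of_to (j, i)). simpl fst; simpl snd. auto.
Qed.
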